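(* Let $n\ge3$. For $\alpha\in[1,\sqrt2]$ the center density of $D_n^\alpha$ satisfies $\delta(\mathbb{Z}^n)\le\delta(D_n^\alpha)\le\delta(D_n)$, i.e. $2^{-n}\le\delta(D_n^\alpha)\le 2^{-n/2-1}$, with the upper bound attained at $\alpha=1$ and the lower bound at $\alpha=\sqrt2$. Moreover, $\alpha\mapsto\delta(D_n^\alpha)$ is strictly decreasing on $[1,\sqrt2]$.
   Context: Let $\mathbf{e}_1,\dots,\mathbf{e}_n$ be the standard basis of $\mathbb{R}^n$. For $n\ge3$, $1\le\alpha\le\sqrt2$ and $\overline\alpha:=\sqrt{2-\alpha^2}$, $D_n^\alpha$ is the lattice with basis $\mathbf{b}_1=\alpha\mathbf{e}_1+\overline\alpha\mathbf{e}_2$, $\mathbf{b}_2=\alpha\mathbf{e}_2+\overline\alpha\mathbf{e}_3$, $\mathbf{b}_3=\overline\alpha\mathbf{e}_1+\alpha\mathbf{e}_3$, $\mathbf{b}_4=\overline\alpha\mathbf{e}_3-\alpha\mathbf{e}_4$, and $\mathbf{b}_k=\overline\alpha\mathbf{e}_{k-1}-\alpha\mathbf{e}_k$ for $5\le k\le n$; $D_n^1=D_n=\{\mathbf{x}\in\mathbb{Z}^n:\sum x_i\equiv0\pmod 2\}$ up to congruence and $D_n^{\sqrt2}=\sqrt2\mathbb{Z}^n$. Center density: $\delta(\Lambda)=\lambda_1(\Lambda)^n/(2^n\operatorname{vol}(\Lambda))$. *)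

(* Defs.v *)
From HB Require Import structures.
From mathcomp Require Import all_boot all_order all_algebra.
From mathcomp Require Import all_classical all_reals all_analysis.
Set Implicit Arguments. Unset Strict Implicit. Unset Printing Implicit Defensive.
Import Order.TTheory GRing.Theory Num.Theory.
Local Open Scope classical_set_scope.
Local Open Scope ring_scope.

(* Lattices in R^n are given by a basis matrix B whose ROWS are the basis
   vectors; lattice points are the integer combinations z *m B. *)
Section Lat.
Variable R : realType.

Definition enorm (n : nat) (v : 'rV[R]_n) : R := Num.sqrt (\sum_i v 0 i ^+ 2).

Definition lattice (n : nat) (B : 'M[R]_n) : set 'rV[R]_n :=
  [set v | exists z : 'rV[int]_n, v = map_mx (fun k : int => k%:~R) z *m B].

Definition lambda1 (n : nat) (B : 'M[R]_n) : R :=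
  inf [set r | exists v, lattice B v /\ v != 0 /\ r = enorm v].

Definition center_density (n : nat) (B : 'M[R]_n) : R :=
  lambda1 B ^+ n / (2 ^+ n * `|\det B|).

Definition alphabar (a : R) : R := Num.sqrt (2 - a ^+ 2).

(* basis of D_n^alpha (0-based indices):
   row 0 = a e0 + ab e1, row 1 = a e1 + ab e2, row 2 = ab e0 + a e2,
   row k (k >= 3) = ab e_{k-1} - a e_k *)
Definition Dalpha_entry (a : R) (i j : nat) : R :=
  let ab := alphabar a in
  if i == 0%N then (if j == 0%N then a else if j == 1%N then ab else 0)
  else if i == 1%N then (if j == 1%N then a else if j == 2%N then ab else 0)
  else if i == 2%N then (if j == 0%N then ab else if j == 2%N then a else 0)
  else if j == i.-1 then ab else if j == i then - a else 0.

Definition Dalpha (n : nat) (a : R) : 'M[R]_n :=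
  \matrix_(i < n, j < n) Dalpha_entry a i j.

End Lat.

(* Main.v *)
Require Import Defs.
From HB Require Import structures.
From mathcomp Require Import all_boot all_order all_algebra.
From mathcomp Require Import all_classical all_reals all_analysis.
From mathcomp Require Import zify ring lra.
Import Order.TTheory GRing.Theory Num.Theory.
Local Open Scope ring_scope.

Section K.
Variable R : realType.

Notation "x %:I" := (x%:~R : R) (at level 2).

Lemma lem1 (x:int) : (x <= -1)%R -> x%:I <= -1.
Proof. move=> h; have: (x+1)%:I <= 0 by rewrite lerz0; lia. rewrite intrD; lra. Qed.
Lemma lep1 (x:int) : (1 <= x)%R -> 1 <= x%:I.
Proof. by move=> h; rewrite ler1z. Qed.
Lemma lem2 (x:int) : (x <= -2)%R -> x%:I <= -2.
Proof. move=> h; have: (x+2)%:I <= 0 by rewrite lerz0; lia. rewrite intrD; lra. Qed.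
Lemma lep2 (x:int) : (2 <= x)%R -> 2 <= x%:I.
Proof. move=> h; have: (x-2)%:I >= 0 by rewrite ler0z; lia. rewrite intrB; lra. Qed.

Variables a b : R.
Hypothesis a1 : 1 <= a.
Hypothesis b0 : 0 <= b.
Hypothesis b1 : b <= 1.
Hypothesis ab2 : a ^+ 2 + b ^+ 2 = 2.

Lemma termP (x y : int) :
  b ^+ 2 <= (a * x%:I + b * y%:I) ^+ 2 \/ (x = 0 /\ y = 0) \/ (x * y < 0)%R.
Proof.
have A1 := a1; have B0 := b0; have B1 := b1; have AB := ab2.
have bb : b ^+ 2 <= 1 by nra.
have [hx|hx|hx] := ltgtP x 0; have [hy|hy|hy] := ltgtP y 0;
  try (by right; right; nia); try (by right; left).
- left. have X := @lem1 x ltac:(lia).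
  have Y := @lem1 y ltac:(lia).
  have : a * x%:I <= - a by nra. have : b * y%:I <= 0 by nra. nra.
- left. have X := @lem1 x ltac:(lia).
  rewrite hy mulr0 addr0. have : a * x%:I <= - a by nra. nra.
- left. have X := @lep1 x ltac:(lia).
  have Y := @lep1 y ltac:(lia).
  have : a * x%:I >= a by nra. have : b * y%:I >= 0 by nra. nra.
- left. have X := @lep1 x ltac:(lia).
  rewrite hy mulr0 addr0. have : a * x%:I >= a by nra. nra.
- left. have Y := @lem1 y ltac:(lia).
  rewrite hx mulr0 add0r. have : b * y%:I <= - b by rewrite -[- b]mulrN1 ler_wpM2l. nra.
- left. have Y := @lep1 y ltac:(lia).
  rewrite hx mulr0 add0r. have : b * y%:I >= b by rewrite -[X in X <= _]mulr1 ler_wpM2l. nra.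
Qed.

Definition zr (z : nat -> int) i : R := (z i)%:~R.

Definition W (z : nat -> int) (k : nat) : R :=
  match k with
  | 0 => a * zr z 0 + b * zr z 2
  | 1 => b * zr z 0 + a * zr z 1
  | 2 => b * zr z 1 + a * zr z 2 + b * zr z 3
  | k'.+3 => - a * zr z k'.+3 + b * zr z k'.+4
  end.

Definition N (z : nat -> int) (m : nat) : R := \sum_(k < m) W z k ^+ 2.

Lemma Nrec z m : N z m.+1 = N z m + W z m ^+ 2.
Proof. by rewrite /N big_ord_recr. Qed.

Lemma N3 z : N z 3 = W z 0 ^+ 2 + W z 1 ^+ 2 + W z 2 ^+ 2.
Proof. by rewrite !Nrec /N big_ord0 add0r. Qed.

Lemma N_ge0 z m : 0 <= N z m.
Proof. by apply: sumr_ge0 => i _; apply: sqr_ge0. Qed.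

Lemma F2 z : (z 3 = 1 \/ z 3 = -1) -> b ^+ 2 <= N z 3.
Proof.
move=> hs.
have A1 := a1; have B0 := b0; have B1 := b1; have AB := ab2.
have e2 : W z 2 = a * zr z 2 + b * zr (fun i => z 1 + z 3) 0.
  by rewrite /= /zr intrD; ring.
have s0 := sqr_ge0 (W z 0); have s1 := sqr_ge0 (W z 1); have s2 := sqr_ge0 (W z 2).
rewrite N3.
have e0 : W z 0 = a * zr z 0 + b * zr z 2 by [].
have e1 : W z 1 = a * zr z 1 + b * zr z 0 by rewrite /= addrC.
case: (termP (z 0) (z 2)) => [h|h0]; first by rewrite -/(zr z 0) -/(zr z 2) -e0 in h; lra.
case: (termP (z 1) (z 0)) => [h|h1]; first by rewrite -/(zr z 0) -/(zr z 1) -e1 in h; lra.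
case: (termP (z 2) (z 1 + z 3)) => [h|h2].
  by rewrite -/(zr z 2) -/(zr (fun i => z 1 + z 3) 0) -e2 in h; lra.
exfalso.
have [p|p|p] := ltgtP (z 0) 0; have [q|q|q] := ltgtP (z 1) 0;
  have [r|r|r] := ltgtP (z 2) 0; case: hs => hs; rewrite hs in h2;
  try nia.
Qed.

Lemma F1 z : z 3 = 0 -> (z 0 <> 0 \/ z 1 <> 0 \/ z 2 <> 0) -> 2 <= N z 3.
Proof.
move=> h3 hnz.
have A1 := a1; have B0 := b0; have B1 := b1; have AB := ab2.
pose A : int := z 0 * z 0 + z 1 * z 1 + z 2 * z 2.
pose C : int := z 0 * z 2 + z 0 * z 1 + z 1 * z 2.
have hA : (1 <= A)%R by rewrite /A; case: hnz => [h|[h|h]]; nia.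
have hAC : (1 <= A + C)%R.
  have key : (2 * (A + C) = (z 0 + z 1)^+2 + (z 0 + z 2)^+2 + (z 1 + z 2)^+2)%R.
    by rewrite /A /C; ring.
  rewrite leNgt; apply/negP => hlt.
  have u1 := sqr_ge0 (z 0 + z 1); have u2 := sqr_ge0 (z 0 + z 2);
  have u3 := sqr_ge0 (z 1 + z 2).
  have e1 : ((z 0 + z 1)^+2 = 0)%R by lia.
  have e2 : ((z 0 + z 2)^+2 = 0)%R by lia.
  have e3 : ((z 1 + z 2)^+2 = 0)%R by lia.
  move/eqP: e1; rewrite sqrf_eq0 => /eqP e1.
  move/eqP: e2; rewrite sqrf_eq0 => /eqP e2.
  move/eqP: e3; rewrite sqrf_eq0 => /eqP e3.
  case: hnz; lia.
have rA : 1 <= A%:~R :> R by rewrite ler1z.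
have rAC : 1 <= A%:~R + C%:~R :> R by rewrite -intrD ler1z.
have eN : N z 3 = (a ^+ 2 + b ^+ 2) * A%:~R + 2 * (a * b) * C%:~R.
  rewrite N3 /= /zr h3 /A /C !intrD !intrM; ring.
rewrite eN AB.
have ab1 : a * b <= 1 by nra.
have ab0 : 0 <= a * b by nra.
have [c0|c0] := lerP 0 (C%:~R : R).
  have : 0 <= a * b * C%:~R by nra. lra.
have : C%:~R <= a * b * C%:~R by nra. lra.
Qed.

Lemma chain (x y : int) : (y = 1 \/ y = -1) -> x <> 0 -> x <> y ->
  b ^+ 2 <= (- a * x%:~R + b * y%:~R) ^+ 2.
Proof.
move=> hy hx hxy.
have A1 := a1; have B0 := b0; have B1 := b1; have AB := ab2.
have bb : b ^+ 2 <= 1 by nra.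
suff : 1 <= (- a * x%:~R + b * y%:~R) ^+ 2 by lra.
case: hy => hy; rewrite hy.
- have [h|h] : (x <= -1 \/ 2 <= x)%R by lia.
  + have X := @lem1 x h. have : - a * x%:~R >= a by nra. nra.
  + have X := @lep2 x h. have : - a * x%:~R <= - 2 * a by nra. nra.
- have [h|h] : (x <= -2 \/ 1 <= x)%R by lia.
  + have X := @lem2 x h. have : - a * x%:~R >= 2 * a by nra. nra.
  + have X := @lep1 x h. have : - a * x%:~R <= - a by nra. nra.
Qed.

Lemma Wm z m : (3 <= m)%N -> W z m = - a * zr z m + b * zr z m.+1.
Proof. by case: m => [|[|[|m]]]. Qed.

Lemma G m z : (3 <= m)%N -> (z m = 1 \/ z m = -1) -> b ^+ 2 <= N z m.
Proof.
elim: m z => [|m IH] z hm hs; first by [].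
have [m3|m3] := leqP 3 m; last first.
  have em : m = 2%N by lia.
  subst m.
  exact: F2.
rewrite Nrec Wm //.
have [e|e] := eqVneq (z m) 0.
  rewrite [zr z m]/zr e mulr0z mulr0 add0r exprMn /zr.
  have : 0 <= N z m := N_ge0 z m.
  have : (z m.+1)%:~R ^+ 2 = 1 :> R by case: hs => ->; rewrite ?expr1n // sqrrN expr1n.
  move=> ->; rewrite mulr1; lra.
have [e'|e'] := eqVneq (z m) (z m.+1).
  have := IH z m3 ltac:(rewrite e'; exact: hs).
  have := sqr_ge0 (- a * zr z m + b * zr z m.+1). lra.
have := chain (z m) (z m.+1) hs (elimN eqP e) (elimN eqP e').
have := N_ge0 z m. rewrite /zr. lra.
Qed.

Lemma H m z : (3 <= m)%N -> (forall i, (m <= i)%N -> z i = 0) ->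
  (exists i, (i < m)%N /\ z i <> 0) -> 2 <= N z m.
Proof.
have A1 := a1; have B0 := b0; have B1 := b1; have AB := ab2.
elim: m z => [|m IH] z hm hsup [i [hi hzi]]; first by [].
have [m3|m3] := leqP 3 m; last first.
  have em : m = 2%N by lia.
  subst m. apply: F1; first exact: hsup.
  by case: i hi hzi => [|[|[|i]]] // _ h; [left|right;left|right;right].
rewrite Nrec Wm // [zr z m.+1]/zr (hsup m.+1) // mulr0z mulr0 addr0.
have [e|e] := eqVneq (z m) 0.
  have hs' : forall j, (m <= j)%N -> z j = 0.
    move=> j hj; have [ej|ne] := eqVneq j m; first by rewrite ej.
    apply: hsup; move/eqP: ne; lia.
  have := IH z m3 hs'.
  have : exists i, (i < m)%N /\ z i <> 0.
    exists i; split => //. have : i <> m by move=> ei; apply: hzi; rewrite ei.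
    lia.
  move=> hh /(_ hh). have := sqr_ge0 (- a * zr z m). lra.
have [h1|h1] : (z m = 1 \/ z m = -1) \/ (z m <= -2 \/ 2 <= z m)%R.
  by move/eqP: e; lia.
  have := G m z m3 h1.
  have : (- a * zr z m) ^+ 2 = a ^+ 2.
    by case: h1 => h1; rewrite /zr h1 ?mulr1 ?mulrN1 ?opprK // sqrrN.
  move=> ->. lra.
have : 4 <= (zr z m) ^+ 2.
  case: h1 => h1.
    have X := @lem2 (z m) h1. rewrite /zr. nra.
  have X := @lep2 (z m) h1. rewrite /zr. nra.
have := N_ge0 z m. rewrite exprMn sqrrN. nra.
Qed.

End K.

Section M.
Variable R : realType.

Definition ind (i e : nat) : R := if i == e then 1 else 0.

Lemma entry_dec (a : R) (i j : nat) : Dalpha_entry a i j =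
  match j with
  | 0 => a * ind i 0 + alphabar a * ind i 2
  | 1 => alphabar a * ind i 0 + a * ind i 1
  | 2 => alphabar a * ind i 1 + a * ind i 2 + alphabar a * ind i 3
  | j'.+3 => - a * ind i j'.+3 + alphabar a * ind i j'.+4
  end.
Proof.
rewrite /Dalpha_entry /ind.
case: j => [|[|[|j]]]; case: i => [|[|[|i]]] /=;
  rewrite ?mulr1 ?mulr0 ?addr0 ?add0r //; rewrite ?eqSS;
  repeat (case: eqP => ? /=); rewrite ?mulr1 ?mulr0 ?addr0 ?add0r //; lia.
Qed.

Variable k : nat.
Variable z : 'rV[int]_(k.+3).

Definition zf (i : nat) : int := if (i < k.+3)%N then z 0 (inord i) else 0.

Lemma zf_ord (i : 'I_(k.+3)) : zf i = z 0 i.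
Proof. by rewrite /zf ltn_ord inord_val. Qed.

Lemma sum_ind (e : nat) :
  \sum_(i < k.+3) (zf i)%:~R * ind i e = (zf e)%:~R :> R.
Proof.
have [he|he] := ltnP e k.+3.
  rewrite (bigD1 (Ordinal he)) //= big1 ?addr0.
    by rewrite /ind eqxx mulr1.
  move=> i /eqP hi; rewrite /ind; case: eqP => [h|_]; last by rewrite mulr0.
  by exfalso; apply: hi; apply: val_inj.
rewrite /zf ltnNge he /= big1 // => i _; rewrite /ind.
case: eqP => [h|_]; last by rewrite mulr0.
by have := ltn_ord i; rewrite h ltnNge he.
Qed.

Lemma sum2 (c1 c2 : R) (e1 e2 : nat) :
  \sum_(i < k.+3) (zf i)%:~R * (c1 * ind i e1 + c2 * ind i e2) =
  c1 * (zf e1)%:~R + c2 * (zf e2)%:~R.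
Proof. rewrite -!sum_ind !mulr_sumr -big_split /=; apply: eq_bigr => i _; ring. Qed.

Lemma sum3 (c1 c2 c3 : R) (e1 e2 e3 : nat) :
  \sum_(i < k.+3) (zf i)%:~R * (c1 * ind i e1 + c2 * ind i e2 + c3 * ind i e3) =
  c1 * (zf e1)%:~R + c2 * (zf e2)%:~R + c3 * (zf e3)%:~R.
Proof.
rewrite -!sum_ind !mulr_sumr -!big_split /=; apply: eq_bigr => i _; ring.
Qed.

Lemma coordW (a : R) (j : 'I_(k.+3)) :
  (map_mx (fun x : int => x%:~R) z *m Dalpha (k.+3) a) 0 j =
  @W R a (alphabar a) zf j.
Proof.
rewrite !mxE.
under eq_bigr => i _ do rewrite !mxE entry_dec -zf_ord.
case: j => -[|[|[|j]]] hj /=.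
- by rewrite sum2.
- by rewrite sum2.
- by rewrite sum3.
- by rewrite sum2.
Qed.

End M.

Section L.
Variable R : realType.
Variable k : nat.
Variable a : R.
Hypothesis a1 : 1 <= a.
Hypothesis a2 : a <= Num.sqrt 2.

Lemma bfacts : 0 <= alphabar a /\ alphabar a <= 1 /\ a ^+ 2 + alphabar a ^+ 2 = 2.
Proof.
have A1 := a1; have A2 := a2.
have s2 : Num.sqrt (2:R) ^+ 2 = 2 by rewrite sqr_sqrtr.
have s0 : 0 <= Num.sqrt (2:R) by [].
have aa : a ^+ 2 <= 2 by nra.
have eb : alphabar a ^+ 2 = 2 - a ^+ 2 by rewrite /alphabar sqr_sqrtr // subr_ge0.
have b0 : 0 <= alphabar a by rewrite /alphabar.
split => //; split; last by rewrite eb; ring.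
nra.
Qed.

Lemma enormW (z : 'rV[int]_(k.+3)) :
  enorm (map_mx (fun x : int => x%:~R) z *m Dalpha (k.+3) a) =
  Num.sqrt (@N R a (alphabar a) (zf k z) k.+3).
Proof.
rewrite /enorm /N; congr Num.sqrt; apply: eq_bigr => i _; by rewrite coordW.
Qed.

Lemma lam_lb (z : 'rV[int]_(k.+3)) :
  map_mx (fun x : int => x%:~R) z *m Dalpha (k.+3) a != 0 ->
  Num.sqrt 2 <= enorm (map_mx (fun x : int => x%:~R) z *m Dalpha (k.+3) a).
Proof.
move=> hv; rewrite enormW ler_sqrt; last exact: N_ge0.
have [b0 [b1 ab2]] := bfacts.
apply: H => //.
  by move=> i hi; rewrite /zf ltnNge hi.
apply: contrapT => hne; move/negP: hv; apply; apply/eqP.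
have z0 : z = 0.
  apply/matrixP => i j; rewrite (ord1 i) mxE.
  case: (eqVneq (z 0 j) 0) => // hj; exfalso; apply: hne.
  by exists j; split; [exact: ltn_ord | rewrite zf_ord; exact/eqP].
by rewrite z0 map_mx0 mul0mx.
Qed.

Definition z0 : 'rV[int]_(k.+3) := \row_(j < k.+3) (if (j : nat) == 0%N then 1 else 0).

Lemma zf0 i : zf k z0 i = if i == 0%N then 1 else 0.
Proof.
rewrite /zf /z0; case: ltnP => hi; first by rewrite mxE inordK.
by case: i hi.
Qed.

Lemma N_z0 : @N R a (alphabar a) (zf k z0) k.+3 = 2.
Proof.
have [b0 [b1 ab2]] := bfacts.
rewrite /N !big_ord_recl big1 ?addr0.
  by rewrite /= /zr !zf0 /=; rewrite -ab2; ring.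
by move=> i _; rewrite /= /zr !zf0 /= mulr0z !mulr0 addr0 expr0n.
Qed.

Lemma lambda1_eq : lambda1 (Dalpha (k.+3) a) = Num.sqrt 2.
Proof.
set v0 := map_mx (fun x : int => x%:~R) z0 *m Dalpha (k.+3) a.
have nv0 : enorm v0 = Num.sqrt 2 by rewrite /v0 enormW N_z0.
have v0n : v0 != 0.
  apply/eqP => e.
  have : enorm v0 = 0.
    by rewrite e /enorm big1 ?sqrtr0 // => i _; rewrite mxE expr0n.
  rewrite nv0 => h; have : (0:R) < Num.sqrt 2 by rewrite sqrtr_gt0 ltr0n.
  lra.
rewrite /lambda1; set S := (X in inf X = _).
have Sv : S (Num.sqrt 2) by exists v0; split; [exists z0|split].
have lb : lbound S (Num.sqrt 2).
  move=> r [v [[z ->] [hv ->]]]; exact: lam_lb.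
apply/eqP; rewrite eq_le; apply/andP; split.
  by apply: ge_inf => //; exists (Num.sqrt 2).
by apply: lb_le_inf => //; exists (Num.sqrt 2).
Qed.

End L.

Section D.
Variable R : realType.
Variable a : R.
Hypothesis a0 : a != 0.
Let b := alphabar a.

Definition Lm : 'M[R]_3 := \matrix_(i < 3, j < 3)
  (if (i : nat) == j then 1 else if ((i : nat) == 2%N) && ((j : nat) == 0%N) then b / a
   else if ((i : nat) == 2%N) && ((j : nat) == 1%N) then - (b ^+ 2 / a ^+ 2) else 0).

Definition Um : 'M[R]_3 := \matrix_(i < 3, j < 3)
  (if ((i : nat) == 0%N) && ((j : nat) == 0%N) then a
   else if ((i : nat) == 0%N) && ((j : nat) == 1%N) then b
   else if ((i : nat) == 1%N) && ((j : nat) == 1%N) then a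
   else if ((i : nat) == 1%N) && ((j : nat) == 2%N) then b
   else if ((i : nat) == 2%N) && ((j : nat) == 2%N) then a + b ^+ 3 / a ^+ 2 else 0).

Lemma det3 : \det (\matrix_(i < 3, j < 3) Dalpha_entry a i j) = a ^+ 3 + b ^+ 3.
Proof.
have -> : \matrix_(i < 3, j < 3) Dalpha_entry a i j = Lm *m Um.
  apply/matrixP => i j; rewrite !mxE !big_ord_recr big_ord0 /= !mxE.
  case: i => [[|[|[|i]]] hi] //; case: j => [[|[|[|j]]] hj] //=;
    rewrite /Dalpha_entry /=; rewrite -/b; field; by rewrite ?a0.
rewrite det_mulmx.
have -> : \det Lm = 1.
  rewrite det_trig; last first.
    apply/is_trig_mxP => i j; rewrite mxE.
    case: i => [[|[|[|i]]] hi] //; case: j => [[|[|[|j]]] hj] //.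
  by rewrite !big_ord_recr big_ord0 /= !mxE /= !mul1r.
rewrite -det_tr det_trig; last first.
  apply/is_trig_mxP => i j; rewrite !mxE.
  case: i => [[|[|[|i]]] hi] //; case: j => [[|[|[|j]]] hj] //.
rewrite !big_ord_recr big_ord0 /= !mxE /=; field; by rewrite ?a0.
Qed.

Lemma detD (k : nat) : \det (Dalpha k.+3 a) = (a ^+ 3 + b ^+ 3) * (- a) ^+ k.
Proof.
pose D : 'M[R]_(3 + k) := Dalpha k.+3 a.
have hur : ursubmx D = 0.
  apply/matrixP => i j; rewrite !mxE.
  by case: i => [[|[|[|i]]] hi] //=.
change (\det D = (a ^+ 3 + b ^+ 3) * (- a) ^+ k).
rewrite -(submxK D) hur det_lblock.
have -> : ulsubmx D = \matrix_(i < 3, j < 3) Dalpha_entry a i j.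
  by apply/matrixP => i j; rewrite !mxE.
rewrite det3; congr (_ * _).
rewrite det_trig; last first.
  apply/is_trig_mxP => i j hij; rewrite !mxE /= /Dalpha_entry /=.
  case: eqP => [h|_]; first lia.
  case: eqP => [h|_] //; lia.
transitivity (\prod_(i < k) (- a)); last by rewrite prodr_const card_ord.
apply: eq_bigr => i _; rewrite !mxE /= /Dalpha_entry /=.
case: eqP => [h|_]; first lia.
by rewrite eqxx.
Qed.

End D.

Section E.
Variable R : realType.

Lemma powle (x y : R) n : 0 <= x -> x <= y -> x ^+ n <= y ^+ n.
Proof.
move=> h1 h2; apply: lerXn2r => //; rewrite ?nnegrE //; exact: le_trans h2.
Qed.

Let s : R := Num.sqrt 2.

Lemma s2 : s ^+ 2 = 2. Proof. by rewrite /s sqr_sqrtr. Qed.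
Lemma s_ge1 : 1 <= s.
Proof. rewrite /s -{1}sqrtr1 ler_sqrt //; lra. Qed.

Definition fD (k : nat) (a : R) : R := (a ^+ 3 + alphabar a ^+ 3) * a ^+ k.

Lemma density_eq (k : nat) (a : R) : 1 <= a -> a <= s ->
  center_density (Dalpha k.+3 a) = (s ^+ k.+3 * fD k a)^-1.
Proof.
move=> a1 a2.
have [b0 [b1 ab2]] := @bfacts R a a1 a2.
have an0 : a != 0 by apply/eqP => a0; rewrite a0 in a1; lra.
rewrite /center_density (@lambda1_eq R k a a1 a2) (@detD R a an0 k).
have a0 : 0 <= a by lra.
rewrite normrM normrX normrN (ger0_norm a0) ger0_norm; last first.
  by apply: addr_ge0; apply: exprn_ge0.
have -> : (2 : R) ^+ k.+3 = s ^+ k.+3 * s ^+ k.+3 by rewrite -exprMn -expr2 s2.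
have hs : 0 < s ^+ k.+3 by apply: exprn_gt0; have := s_ge1; lra.
rewrite /fD -/s invfM mulrA mulrA.
have g0 : 0 < a ^+ 3 + alphabar a ^+ 3.
  have : 1 <= a ^+ 3 by rewrite -(expr1n _ 3); apply: powle.
  have : 0 <= alphabar a ^+ 3 by apply: exprn_ge0.
  lra.
have ak : 0 < a ^+ k by apply: exprn_gt0; lra.
have hs0 : 0 < Num.sqrt (2:R) ^+ k.+3 by [].
field.
by rewrite !gt_eqF.
Qed.

Lemma g_facts (a : R) : 1 <= a -> a <= s ->
  2 <= a ^+ 3 + alphabar a ^+ 3 /\ a ^+ 3 + alphabar a ^+ 3 <= s ^+ 3.
Proof.
move=> a1 a2.
have [b0 [b1 ab2]] := @bfacts R a a1 a2.
set b := alphabar a in b0 b1 ab2 *.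
have S2 := s2; have S1 := s_ge1.
have ab1 : a * b <= 1 by nra.
split.
  have h1 : b ^+ 2 * (1 + a) <= b + 1 by nra.
  have h2 : a - 1 = (1 - b) * (1 + b) / (1 + a).
    apply: (mulIf (_ : 1 + a != 0)); first by apply/eqP; lra.
    rewrite mulfVK; last by apply/eqP; lra.
    nra.
  have h3 : b ^+ 2 * (1 - b) <= a - 1.
    rewrite h2 ler_pdivlMr; last lra.
    nra.
  nra.
have -> : s ^+ 3 = s * 2 by rewrite exprS s2.
nra.
Qed.

Lemma g_strict (a c : R) : 1 <= a -> a < c -> c <= s ->
  a ^+ 3 + alphabar a ^+ 3 < c ^+ 3 + alphabar c ^+ 3.
Proof.
move=> a1 ac c2.
have a2 : a <= s by lra.
have c1 : 1 <= c by lra.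
have [b0 [b1 ab2]] := @bfacts R a a1 a2.
have [d0 [d1 cd2]] := @bfacts R c c1 c2.
set b := alphabar a in b0 b1 ab2 *.
set d := alphabar c in d0 d1 cd2 *.
have db : d < b by nra.
have Sa : c ^+ 2 + a * c + a ^+ 2 > 3 / 2 * (a + c) by nra.
have Sb : b ^+ 2 + b * d + d ^+ 2 <= 3 / 2 * (b + d) by nra.
have key : (c - a) * (c + a) = (b - d) * (b + d) by nra.
have e1 : c ^+ 3 - a ^+ 3 = (c - a) * (c ^+ 2 + a * c + a ^+ 2) by ring.
have e2 : b ^+ 3 - d ^+ 3 = (b - d) * (b ^+ 2 + b * d + d ^+ 2) by ring.
suff : (b - d) * (b ^+ 2 + b * d + d ^+ 2) < (c - a) * (c ^+ 2 + a * c + a ^+ 2) by nra.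
have pos : 0 < (c + a) * (b + d) by nra.
rewrite -(ltr_pM2r pos).
have -> : (c - a) * (c ^+ 2 + a * c + a ^+ 2) * ((c + a) * (b + d)) =
  (b - d) * (b + d) * ((c ^+ 2 + a * c + a ^+ 2) * (b + d)) by rewrite -key; ring.
have bd0 : 0 < (b - d) * (b + d) by nra.
have -> : (b - d) * (b ^+ 2 + b * d + d ^+ 2) * ((c + a) * (b + d)) =
  (b - d) * (b + d) * ((b ^+ 2 + b * d + d ^+ 2) * (c + a)) by ring.
rewrite ltr_pM2l //.
nra.
Qed.

Lemma powR_eq (n : nat) : (2 : R) `^ (- (n%:R / 2) - 1) = (2 * s ^+ n)^-1.
Proof.
rewrite -opprD powRN; congr (_^-1).
rewrite powRD; last by apply/implyP => _.
rewrite powRr1 // mulrC (mulrC n%:R) powRrM powR12_sqrt // powR_mulrn //.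
Qed.

Lemma mainTheorem17_aux (n : nat) (hn : (3 <= n)%N) :
  [/\ (forall a : R, 1 <= a -> a <= Num.sqrt 2 ->
         (2 ^+ n)^-1 <= center_density (Dalpha n a) /\
         center_density (Dalpha n a) <= 2 `^ (- (n%:R / 2) - 1)),
      center_density (Dalpha n (1 : R)) = 2 `^ (- (n%:R / 2) - 1),
      center_density (Dalpha n (Num.sqrt (2 : R))) = (2 ^+ n)^-1
    & forall a b : R, 1 <= a -> a < b -> b <= Num.sqrt 2 ->
         center_density (Dalpha n b) < center_density (Dalpha n a)].
Proof.
case: n hn => [|[|[|k]]] // _.
rewrite powR_eq.
have S2 := s2; have S1 := s_ge1.
have hsn : 0 < s ^+ k.+3 by apply: exprn_gt0; lra.
have e2 : (2 : R) ^+ k.+3 = s ^+ k.+3 * s ^+ k.+3 by rewrite -exprMn -expr2 s2.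
have fpos : forall a, 1 <= a -> a <= s -> 0 < fD k a.
  move=> a a1 a2; have [g1 _] := g_facts a a1 a2.
  rewrite /fD; apply: mulr_gt0; first lra. apply: exprn_gt0; lra.
split.
- move=> a a1 a2; rewrite (density_eq k a a1 a2) e2.
  have [g1 g2] := g_facts a a1 a2.
  have fp := fpos a a1 a2.
  have ak1 : 1 <= a ^+ k by rewrite -(expr1n _ k); apply: powle.
  have aks : a ^+ k <= s ^+ k by apply: powle => //; lra.
  split.
  + have p1 : 0 < s ^+ k.+3 * s ^+ k.+3 by apply: mulr_gt0.
    have p2 : 0 < s ^+ k.+3 * fD k a by apply: mulr_gt0.
    rewrite lef_pV2 ?posrE // ler_pM2l //.
    have -> : s ^+ k.+3 = s ^+ 3 * s ^+ k by rewrite mulrC -exprD addn3.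
    rewrite /fD; apply: ler_pM => //; lra.
  + have p1 : 0 < 2 * s ^+ k.+3 by apply: mulr_gt0; lra.
    have p2 : 0 < s ^+ k.+3 * fD k a by apply: mulr_gt0.
    rewrite lef_pV2 ?posrE // [2 * _]mulrC ler_pM2l //.
    rewrite /fD; nra.
- have a1 : (1:R) <= 1 by [].
  have a2 : (1:R) <= s by [].
  rewrite (density_eq k 1 a1 a2) /fD !expr1n mulr1 /alphabar !expr1n.
  have -> : (2 : R) - 1 = 1 by lra.
  by rewrite sqrtr1 expr1n mulrC.
- have a2 : s <= s by [].
  rewrite -/s (density_eq k s S1 a2) /fD /alphabar s2 subrr sqrtr0 expr0n addr0.
  by rewrite e2 -exprD -exprD addnC.
- move=> a c a1 ac c2; rewrite -/s in c2.
  have c1 : 1 <= c by lra.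
  have a2 : a <= s by lra.
  rewrite (density_eq k a a1 a2) (density_eq k c c1 c2).
  have fa := fpos a a1 a2; have fc := fpos c c1 c2.
  have p1 : 0 < s ^+ k.+3 * fD k a by apply: mulr_gt0.
  have p2 : 0 < s ^+ k.+3 * fD k c by apply: mulr_gt0.
  rewrite ltf_pV2 ?posrE // ltr_pM2l //.
  have gs := g_strict a c a1 ac c2.
  have akc : a ^+ k <= c ^+ k by apply: powle; lra.
  have ak : 0 < a ^+ k by apply: exprn_gt0; lra.
  have [g1 _] := g_facts a a1 a2.
  rewrite /fD; nra.
Qed.

End E.

Theorem mainTheorem17 (R : realType) (n : nat) (hn : (3 <= n)%N) :
  [/\ (forall a : R, 1 <= a -> a <= Num.sqrt 2 ->
         (2 ^+ n)^-1 <= center_density (Dalpha n a) /\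
         center_density (Dalpha n a) <= 2 `^ (- (n%:R / 2) - 1)),
      center_density (Dalpha n (1 : R)) = 2 `^ (- (n%:R / 2) - 1),
      center_density (Dalpha n (Num.sqrt (2 : R))) = (2 ^+ n)^-1
    & forall a b : R, 1 <= a -> a < b -> b <= Num.sqrt 2 ->
         center_density (Dalpha n b) < center_density (Dalpha n a)].
Proof. exact: (@mainTheorem17_aux R n hn). Qed.
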